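(* Any (randomized) voting rule taking top-$t$ preference profiles as input with constant metric distortion has utilitarian distortion $\Omega\!\left(\max\!\left(\frac{m\sqrt m}{t\sqrt t},\sqrt m\right)\right)$.
   Context: Setting: $n$ agents, $m$ alternatives; each agent has an underlying strict ranking, but the rule only receives each agent's ordered list of her top $t$ alternatives (a top-$t$ profile $\vec\sigma_t$) and outputs a distribution over alternatives. A metric (pseudometric on agents and alternatives) or a unit-sum utility profile is consistent with $\vec\sigma_t$ if it is consistent with some full ranking profile extending $\vec\sigma_t$, where $d$ is consistent with full $\vec\sigma$ if $X\succ_iY\Rightarrow d(i,X)\le d(i,Y)$ and $\vec u$ if $X\succ_iY\Rightarrow u_i(X)\ge u_i(Y)$. $\mathrm{SC}(X,d)=\sum_id(i,X)$, $\mathrm{SW}(X,\vec u)=\sum_iu_i(X)$ with $u_i\ge0$, $\sum_Xu_i(X)=1$. Metric distortion: worst case over top-$t$ profiles and consistent $d$ of $\mathbb E[\mathrm{SC}(\text{output},d)]/\min_X\mathrm{SC}(X,d)$; utilitarian distortion: worst case over top-$t$ profiles and consistent $\vec u$ of $\max_X\mathrm{SW}(X,\vec u)/\mathbb E[\mathrm{SW}(\text{output},\vec u)]$. *)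

(* Defs.v *)
From HB Require Import structures.
From mathcomp Require Import all_boot all_order all_algebra all_fingroup.
From mathcomp Require Import reals.
Set Implicit Arguments. Unset Strict Implicit. Unset Printing Implicit Defensive.
Import Order.TTheory GRing.Theory Num.Theory.
Local Open Scope ring_scope.

Section Voting.
Variable R : realType.

(* Agents are 'I_n, alternatives are 'I_m.  A full ranking of agent i is a
   permutation sigma i of 'I_m: (sigma i) k is the alternative in position k
   (position 0 = top). *)
Definition full_profile (n m : nat) := {ffun 'I_n -> {perm 'I_m}}.

Definition prefers n m (s : full_profile n m) (i : 'I_n) (X Y : 'I_m) : bool :=
  (((s i)^-1)%g X < ((s i)^-1)%g Y)%N.

Definition top_profile n m (t : nat) (s : full_profile n m) : {ffun 'I_n -> seq 'I_m} :=
  [ffun i => [seq s i k | k <- take t (enum 'I_m)]].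

Definition rule (m : nat) := forall n : nat, {ffun 'I_n -> seq 'I_m} -> 'I_m -> R.

Definition is_distribution m (p : 'I_m -> R) : Prop :=
  (forall X, 0 <= p X) /\ \sum_(X < m) p X = 1.

Definition is_rule m (t : nat) (f : rule m) : Prop :=
  forall n (s : full_profile n m), is_distribution (f n (top_profile t s)).

Definition pseudometric (T : Type) (d : T -> T -> R) : Prop :=
  (forall x, d x x = 0) /\ (forall x y, d x y = d y x) /\
  (forall x y z, d x z <= d x y + d y z).

Definition metric_consistent n m (s : full_profile n m)
    (d : 'I_n + 'I_m -> 'I_n + 'I_m -> R) : Prop :=
  forall i X Y, prefers s i X Y -> d (inl i) (inr X) <= d (inl i) (inr Y).

Definition SC n m (d : 'I_n + 'I_m -> 'I_n + 'I_m -> R) (X : 'I_m) : R :=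
  \sum_(i < n) d (inl i) (inr X).

Definition unit_sum n m (u : 'I_n -> 'I_m -> R) : Prop :=
  (forall i X, 0 <= u i X) /\ (forall i, \sum_(X < m) u i X = 1).

Definition utility_consistent n m (s : full_profile n m) (u : 'I_n -> 'I_m -> R) : Prop :=
  forall i X Y, prefers s i X Y -> u i Y <= u i X.

Definition SW n m (u : 'I_n -> 'I_m -> R) (X : 'I_m) : R := \sum_(i < n) u i X.

Definition expect m (p : 'I_m -> R) (g : 'I_m -> R) : R := \sum_(X < m) p X * g X.

(* Metric distortion of f is at most C: on every top-t profile (every full
   profile extending it) and every consistent pseudometric,
   E[SC(output)] <= C * min_X SC(X). *)
Definition metric_distortion_le m t (f : rule m) (C : R) : Prop :=
  forall n (s : full_profile n m) (d : 'I_n + 'I_m -> 'I_n + 'I_m -> R),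
    pseudometric d -> metric_consistent s d ->
    forall X, expect (f n (top_profile t s)) (SC d) <= C * SC d X.

Definition util_distortion_ge m t (f : rule m) (D : R) : Prop :=
  exists n (s : full_profile n m) (u : 'I_n -> 'I_m -> R),
    (0 < n)%N /\ unit_sum u /\ utility_consistent s u /\
    exists X, D * expect (f n (top_profile t s)) (SW u) <= SW u X.

End Voting.

(* Main.v *)
Require Import Defs.
From HB Require Import structures.
From mathcomp Require Import all_boot all_order all_algebra all_fingroup.
From mathcomp Require Import reals.
From mathcomp Require Import zify ring lra.
Import Order.TTheory GRing.Theory Num.Theory.

Module W1.
Import Order.TTheory GRing.Theory Num.Theory.
Set Implicit Arguments. Unset Strict Implicit. Unset Printing Implicit Defensive.

Section Build.
Variables (n m : nat).
Variable P : 'I_n -> seq 'I_m.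
Variable key : 'I_n -> 'I_m -> nat.
Definition Kx i x : nat := if x \in P i then 0 else (key i x).+1.
Definition leK i := fun x y => Kx i x <= Kx i y.
Definition lst i : seq 'I_m :=
  undup (P i) ++ sort (leK i) [seq x <- enum 'I_m | x \notin P i].

Lemma lst_uniq i : uniq (lst i).
Proof.
rewrite /lst cat_uniq undup_uniq sort_uniq filter_uniq ?enum_uniq //=.
rewrite andbT -all_predC; apply/allP => x; rewrite mem_sort mem_filter /= mem_undup => /andP[H _]; exact: H.
Qed.

Lemma size_lst i : size (lst i) = m.
Proof.
rewrite -[RHS](size_enum_ord m); apply: perm_size; apply: uniq_perm.
- exact: lst_uniq.
- exact: enum_uniq.
move=> x; rewrite mem_enum /lst mem_cat mem_undup mem_sort mem_filter mem_enum andbT.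
by case: (x \in P i).
Qed.

Definition sig i (k : 'I_m) : 'I_m := nth k (lst i) k.

Lemma sig_inj i : injective (sig i).
Proof.
move=> k1 k2; rewrite /sig.
have h1 : k1 < size (lst i) by rewrite size_lst.
have h2 : k2 < size (lst i) by rewrite size_lst.
rewrite (set_nth_default k1 k2 h2) => /eqP.
rewrite nth_uniq ?lst_uniq // => /eqP H; exact: val_inj.
Qed.

Definition bprof : full_profile n m := [ffun i => perm (@sig_inj i)].

Lemma lst_sorted i : sorted (leK i) (lst i).
Proof.
have tr : transitive (leK i) by move=> y x z; rewrite /leK; apply: leq_trans.
rewrite /lst.
have: sorted (leK i) (sort (leK i) [seq x <- enum 'I_m | x \notin P i]).
  by apply: sort_sorted => x y; rewrite /leK leq_total.
have : forall x, x \in undup (P i) -> Kx i x = 0 by move=> x; rewrite /Kx mem_undup => ->.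
move: (sort _ _) => Q.
elim: (undup (P i)) => [//|x s IH] /= HP Hs.
have := IH (fun y hy => HP y ltac:(by rewrite inE hy orbT)) Hs.
case: (s ++ _) => [//|y r] /= Hr.
by rewrite Hr andbT /leK (HP x (mem_head _ _)).
Qed.

Lemma prefers_K i X Y : prefers bprof i X Y -> Kx i X <= Kx i Y.
Proof.
rewrite /prefers /bprof ffunE => H.
set a := (perm (@sig_inj i))^-1%g X in H.
set b := (perm (@sig_inj i))^-1%g Y in H.
have eX : nth X (lst i) a = X.
  have := permKV (perm (@sig_inj i)) X; rewrite permE /sig -/a => E.
  by rewrite (set_nth_default a X) ?size_lst.
have eY : nth X (lst i) b = Y.
  have := permKV (perm (@sig_inj i)) Y; rewrite permE /sig -/b => E.
  by rewrite (set_nth_default b X) ?size_lst.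
have tr : transitive (leK i) by move=> y x z; rewrite /leK; apply: leq_trans.
have rf : reflexive (leK i) by move=> x; rewrite /leK.
have Ha : (val a) \in [pred n : nat | n < size (lst i)] by rewrite inE /= size_lst ltn_ord.
have Hb : (val b) \in [pred n : nat | n < size (lst i)] by rewrite inE /= size_lst ltn_ord.
have := @sorted_leq_nth _ (leK i) tr rf X (lst i) (lst_sorted i) (val a) (val b) Ha Hb (ltnW H).
by rewrite eX eY.
Qed.
End Build.

End W1.
Import W1.

Module W2.
Import Order.TTheory GRing.Theory Num.Theory.
Set Implicit Arguments. Unset Strict Implicit. Unset Printing Implicit Defensive.

Lemma top_eq n m t (P : 'I_n -> seq 'I_m) k1 k2 :
  (forall i, uniq (P i)) -> (forall i, t <= size (P i)) ->
  top_profile t (bprof P k1) = top_profile t (bprof P k2).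
Proof.
move=> Pu Ht; apply/ffunP => i; rewrite !ffunE; apply/eq_in_map => k Hk.
have Hkt : k < t by have := index_ltn Hk; rewrite index_enum_ord.
rewrite !permE /sig /lst undup_id // !nth_cat.
by rewrite (leq_trans Hkt (Ht i)).
Qed.

Local Open Scope ring_scope.

Lemma sum_if (R : realType) m (p : pred 'I_m) (v : R) :
  \sum_(x < m) (if p x then v else 0) = #|p|%:R * v.
Proof. by rewrite -big_mkcond /= sumr_const mulr_natl. Qed.

Section Util.
Variable R : realType.
Variables (n m : nat) (P : 'I_n -> seq 'I_m) (key : 'I_n -> 'I_m -> nat).
Variable lvl : 'I_n -> nat.
Definition ulev (i : 'I_n) (x : 'I_m) : R :=
  if (Kx P key i x <= lvl i)%N then (#|[pred y | (Kx P key i y <= lvl i)%N]|%:R)^-1 else 0.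

Lemma ulev_ge0 i x : 0 <= ulev i x.
Proof. by rewrite /ulev; case: ifP => // _; rewrite invr_ge0 ler0n. Qed.

Lemma ulev_cons : utility_consistent (bprof P key) ulev.
Proof.
move=> i X Y /prefers_K H.
rewrite /ulev; case: ifP => HY; last by case: ifP => // _; rewrite invr_ge0 ler0n.
by rewrite (leq_trans H HY).
Qed.

Lemma ulev_unit : (forall i, exists x, Kx P key i x <= lvl i)%N -> unit_sum ulev.
Proof.
move=> Hex; split; first exact: ulev_ge0.
move=> i; rewrite /ulev sum_if mulfV //.
case: (Hex i) => x Hx; rewrite pnatr_eq0 -lt0n; apply/card_gt0P; by exists x.
Qed.
End Util.

Section Metric.
Variable R : realType.
Variables (n m : nat) (ag : 'I_n -> bool) (cl : 'I_m -> bool).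
Definition clu (z : 'I_n + 'I_m) : bool :=
  match z with inl i => ag i | inr x => cl x end.
Definition dcl (u v : 'I_n + 'I_m) : R := (clu u != clu v)%:R.

Lemma dcl_pm : pseudometric dcl.
Proof.
rewrite /dcl; split; first by move=> x; rewrite eqxx.
split; first by move=> x y; rewrite eq_sym.
move=> x y z; case: (clu x); case: (clu y); case: (clu z) => //=;
  rewrite ?add0r ?addr0 ?ler01 ?lexx //.
all: by rewrite addr_ge0 ?ler01.
Qed.

Variable P : 'I_n -> seq 'I_m.
Hypothesis Pcl : forall i x, x \in P i -> cl x = ag i.

Lemma dcl_cons : metric_consistent (bprof P (fun i x => nat_of_bool (cl x != ag i))) dcl.
Proof.
move=> i X Y /prefers_K; rewrite /dcl /= /Kx.
case HX: (X \in P i); first by rewrite (Pcl HX) eqxx ler0n.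
case HY: (Y \in P i); first by [].
by case: (cl X); case: (cl Y); case: (ag i); rewrite /= ?ler01 ?lexx ?ler0n.
Qed.

Lemma SC_dcl X : SC dcl X = \sum_(i < n) (ag i != cl X)%:R.
Proof. by []. Qed.
End Metric.

End W2.
Import W2.

Module W3.
Set Implicit Arguments. Unset Strict Implicit. Unset Printing Implicit Defensive.

Lemma card_count N (p : pred nat) : #|[pred x : 'I_N | p x]| = count p (iota 0 N).
Proof.
rewrite -sum1_card -sum1_count.
rewrite -(big_mkord (fun i => p i) (fun _ => 1%N)) /index_iota subn0.
by [].
Qed.

Lemma count_all (p : pred nat) s l : (forall x, s <= x < s + l -> p x) -> count p (iota s l) = l.
Proof.
move=> H; rewrite -[RHS](size_iota s l) -count_predT; apply: eq_in_count => x.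
by rewrite mem_iota => /H ->.
Qed.

Lemma count_none (p : pred nat) s l : (forall x, s <= x < s + l -> ~~ p x) -> count p (iota s l) = 0.
Proof.
move=> H; rewrite -(count_pred0 (iota s l)); apply: eq_in_count => x.
by rewrite mem_iota => /H /negbTE ->.
Qed.

Lemma card_block N t b : 0 < t -> b.+1 * t <= N -> #|[pred x : 'I_N | x %/ t == b]| = t.
Proof.
move=> t0 H; rewrite (card_count N (fun x => x %/ t == b)).
have -> : N = b * t + (t + (N - b.+1 * t)) by lia.
rewrite iotaD (iotaD (0 + b * t)) !count_cat.
rewrite (@count_none _ 0) ?(@count_all _ (0 + b * t)) ?(@count_none _ (0 + b * t + t)) ?add0n ?addn0 //.
all: move=> x /andP[h1 h2]; have := divn_eq x t; have := ltn_pmod x t0.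
all: move: (x %/ t) (x %% t) => q r; move=> h3 h4.
- apply/negP => /eqP hq; subst q; nia.
- apply/eqP; nia.
- apply/negP => /eqP hq; subst q; nia.
Qed.

Lemma card_le_block N t b : 0 < t -> #|[pred x : 'I_N | x %/ t == b]| <= t.
Proof.
move=> t0; have := @card_block (N + b.+1 * t) t b t0 (leq_addl _ _).
rewrite (card_count N (fun x => x %/ t == b)).
rewrite (card_count (N + b.+1*t) (fun x => x %/ t == b)) iotaD count_cat => E.
by rewrite -[X in _ <= X]E leq_addr.
Qed.

Lemma card_gt N a : a < N -> #|[pred x : 'I_N | a < x]| = N - a.+1.
Proof.
move=> H; rewrite (card_count N (fun x => a < x)).
have -> : N = a.+1 + (N - a.+1) by lia.
rewrite iotaD count_cat count_none ?count_all ?add0n; first by lia.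
- move=> x /andP[h1 h2]; lia.
- move=> x /andP[h1 h2]; lia.
Qed.

Lemma isqrt t m : 0 < t -> exists g, g * g * t <= m < g.+1 * g.+1 * t.
Proof.
move=> t0; elim: m => [|m [g /andP[h1 h2]]].
  by exists 0; rewrite /=; lia.
case: (leqP (g.+1 * g.+1 * t) m.+1) => h3.
  exists g.+1; rewrite h3 /=; nia.
by exists g; rewrite h3 andbT; lia.
Qed.

End W3.
Import W3.

Module W4.
Import Order.TTheory GRing.Theory Num.Theory.
Set Implicit Arguments. Unset Strict Implicit. Unset Printing Implicit Defensive.
Local Open Scope ring_scope.

Lemma sum_inj (R : realType) n m (h : 'I_n -> 'I_m) (p : 'I_m -> R) :
  injective h -> (forall x, 0 <= p x) -> \sum_(i < n) p (h i) <= \sum_(x < m) p x.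
Proof.
move=> hi p0; rewrite -(big_imset _ (in2W hi)) /=.
rewrite [X in _ <= X](bigID (mem [set h x | x in 'I_n])) /=.
by rewrite lerDl sumr_ge0.
Qed.

Lemma sum_pred1 (R : realType) q (c : nat) :
  \sum_(k < q) ((c == k)%:R : R) = (c < q)%N%:R.
Proof.
rewrite (eq_bigr (fun k : 'I_q => if c == k then 1 else 0)); last by move=> k _; case: (c == k).
rewrite -big_mkcond /= sumr_const (card_count q (fun k => c == k)).
have -> : count (fun k => c == k) (iota 0 q) = count_mem c (iota 0 q).
  by apply: eq_count => k; rewrite eq_sym.
by rewrite count_uniq_mem ?iota_uniq // mem_iota /= add0n; case: (c < q)%N.
Qed.

Lemma sum_bool (R : realType) N (b : pred 'I_N) :
  \sum_(j < N) ((b j)%:R : R) = #|[pred j | b j]|%:R.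
Proof.
rewrite (eq_bigr (fun j : 'I_N => if b j then 1 else 0)); last by move=> j _; case: (b j).
by rewrite -big_mkcond /= sumr_const.
Qed.

End W4.
Import W4.

Module W5.
Import Order.TTheory GRing.Theory Num.Theory.
Set Implicit Arguments. Unset Strict Implicit. Unset Printing Implicit Defensive.


Section Inst2.
Variable R : realType.
Variables (m t q g : nat).
Hypotheses (t0 : (0 < t)%N) (q0 : (0 < q)%N) (g0 : (0 < g)%N) (hm : (2*q*t < m)%N).
Definition n2 := (q * g + q)%N.
Definition isact (i : 'I_n2) : bool := (q * g <= i)%N.
Definition blk (i : 'I_n2) : nat := if isact i then (i - q*g)%N else (q + i %/ g)%N.
Definition P2 (i : 'I_n2) : seq 'I_m := [seq x : 'I_m <- enum 'I_m | x %/ t == blk i].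
Definition A2 : 'I_m := Ordinal hm.
Definition D2 := (m - (2*q*t).+1)%N.

Lemma blk_lt i : (blk i < 2 * q)%N.
Proof.
rewrite /blk /isact; case: ifP => h; first by have := ltn_ord i; rewrite /n2; lia.
have h2 : (i %/ g < q)%N by rewrite ltn_divLR //; lia.
lia.
Qed.

Lemma P2_mem i x : (x \in P2 i) = (x %/ t == blk i).
Proof. by rewrite mem_filter mem_enum andbT. Qed.

Lemma P2_uniq i : uniq (P2 i).
Proof. by rewrite filter_uniq ?enum_uniq. Qed.

Lemma P2_size i : size (P2 i) = t.
Proof.
rewrite size_filter.
have -> : count (fun x : 'I_m => x %/ t == blk i) (enum 'I_m) =
          count (fun n => n %/ t == blk i) (map val (enum 'I_m)) by rewrite count_map.
rewrite val_enum_ord -(card_count m (fun n => n %/ t == blk i)) card_block //.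
have := blk_lt i; nia.
Qed.

Lemma A2_notin i : A2 \notin P2 i.
Proof.
rewrite P2_mem /A2 /=; have := blk_lt i.
have -> : (2 * q * t %/ t = 2 * q)%N by rewrite mulnK.
by move=> h; apply/negP => /eqP h2; rewrite h2 ltnn in h.
Qed.

Definition keyU (i : 'I_n2) (x : 'I_m) : nat :=
  if isact i then nat_of_bool (x != A2) else nat_of_bool (~~ (2*q*t < x)).
Definition uU : 'I_n2 -> 'I_m -> R := ulev R P2 keyU (fun _ => 1%N).
Definition sU := bprof P2 keyU.

Lemma KU_act i x : isact i -> (Kx P2 keyU i x <= 1) = (x \in P2 i) || (x == A2).
Proof. by move=> h; rewrite /Kx /keyU h; case: (x \in P2 i); case: (x == A2). Qed.

Lemma KU_pas i x : ~~ isact i -> (Kx P2 keyU i x <= 1) = (x \in P2 i) || (2*q*t < x).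
Proof. by move=> /negbTE h; rewrite /Kx /keyU h; case: (x \in P2 i); case: (2*q*t < x). Qed.

Lemma card_act i : isact i -> t <= #|[pred y | Kx P2 keyU i y <= 1]| <= t.+1.
Proof.
move=> h; apply/andP; split.
  rewrite -{1}(P2_size i) -(card_uniqP (P2_uniq i)); apply: subset_leq_card.
  by apply/subsetP => y; rewrite !inE KU_act // => ->.
have -> : #|[pred y | Kx P2 keyU i y <= 1]| = #|[predU mem (P2 i) & pred1 A2]|.
  by apply: eq_card => y; rewrite !inE KU_act.
have := cardUI (mem (P2 i)) (pred1 A2); rewrite (card_uniqP (P2_uniq i)) P2_size card1.
by move=> E; rewrite -addn1 -E leq_addr.
Qed.

Lemma card_pas i : ~~ isact i -> D2 <= #|[pred y | Kx P2 keyU i y <= 1]|.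
Proof.
move=> h; rewrite /D2 -card_gt //; apply: subset_leq_card.
by apply/subsetP => y; rewrite !inE KU_pas // => ->; rewrite orbT.
Qed.

Hypothesis hD : (0 < D2)%N.
Local Open Scope ring_scope.

Lemma u_act_le i x : isact i ->
  uU i x <= ((x \in P2 i) || (x == A2))%:R / t%:R.
Proof.
move=> h; rewrite /uU /ulev KU_act //; case: ifP => H; last by rewrite mul0r.
have /andP[c1 _] := card_act h.
by rewrite mul1r lef_pV2 ?posrE ?ltr0n ?ler_nat //; exact: (leq_trans t0 c1).
Qed.

Lemma u_act_A i : isact i -> (t.+1%:R)^-1 <= uU i A2.
Proof.
move=> h; rewrite /uU /ulev KU_act // eqxx orbT.
have /andP[c1 c2] := card_act h.
rewrite lef_pV2 ?posrE ?ltr0n ?ler_nat //; exact: (leq_trans t0 c1).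
Qed.

Lemma u_pas_le i x : ~~ isact i ->
  uU i x <= ((x \in P2 i) || (2*q*t < x)%N)%:R / D2%:R.
Proof.
move=> h; rewrite /uU /ulev KU_pas //; case: ifP => H; last by rewrite mul0r.
have c1 := card_pas h.
rewrite mul1r lef_pV2 ?posrE ?ltr0n ?ler_nat //; exact: (leq_trans hD c1).
Qed.

Lemma E_bound (p : 'I_m -> R) : (forall x, 0 <= p x) -> \sum_(x < m) p x = 1 ->
  (forall x : 'I_m, (2*q*t <= x)%N -> p x = 0) ->
  expect p (SW uU) <= (\sum_(x < m) p x * (x %/ t < q)%N%:R) / t%:R + g%:R / D2%:R.
Proof.
move=> p0 p1 pz.
pose w (i : 'I_n2) (x : 'I_m) : R :=
  if isact i then (x \in P2 i)%:R / t%:R else (x \in P2 i)%:R / D2%:R.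
have step1 : expect p (SW uU) <= \sum_(x < m) \sum_(i < n2) p x * w i x.
  rewrite /expect /SW; apply: ler_sum => x _; rewrite mulr_sumr; apply: ler_sum => i _.
  case: (leqP (2*q*t) x) => hx; first by rewrite pz // !mul0r.
  apply: ler_wpM2l => //; rewrite /w; case: ifP => h.
    have hA : (x == A2) = false by apply/negbTE; apply/eqP => E; rewrite E /= ltnn in hx.
    by have := u_act_le x h; rewrite hA orbF.
  have hA : (2*q*t < x)%N = false by lia.
  have h' : ~~ isact i by rewrite h.
  by have := u_pas_le x h'; rewrite hA orbF.
apply: (le_trans step1); rewrite exchange_big /= big_split_ord /= addrC.
apply: lerD.
- rewrite (eq_bigr (fun k : 'I_q => \sum_(x < m) p x * (x %/ t == k)%N%:R / t%:R)); last first.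
    move=> k _; apply: eq_bigr => x _; rewrite /w P2_mem /blk /isact /=.
    have -> : (q * g <= q * g + k)%N by rewrite leq_addr.
    by rewrite /= mulrA addKn.
  rewrite exchange_big /= mulr_suml; apply: ler_sum => x _.
  by rewrite -mulr_suml -mulr_sumr sum_pred1.
- rewrite (eq_bigr (fun j : 'I_(q*g) => \sum_(x < m) p x * (x %/ t == q + j %/ g)%N%:R / D2%:R)); last first.
    move=> j _; apply: eq_bigr => x _; rewrite /w P2_mem /blk /isact /=.
    have -> : (q * g <= j)%N = false by apply/negbTE; rewrite -ltnNge ltn_ord.
    by rewrite /= mulrA.
  rewrite exchange_big /=.
  apply: (le_trans (y := \sum_(x < m) p x * g%:R / D2%:R)); last first.
    by rewrite -mulr_suml -mulr_suml p1 mul1r.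
  apply: ler_sum => x _.
  rewrite -mulr_suml -mulr_sumr; apply: ler_wpM2r; first by rewrite invr_ge0 ler0n.
  apply: ler_wpM2l => //.
  rewrite sum_bool ler_nat.
  apply: (leq_trans _ (card_le_block (q * g) (x %/ t - q)%N g0)).
  apply: subset_leq_card; apply/subsetP => j; rewrite !inE => /eqP E.
  by rewrite E addKn.
Qed.

Definition cl1 (x : 'I_m) : bool := ~~ (x %/ t < 2*q)%N.
Definition cl2 (x : 'I_m) : bool := (x %/ t < q)%N.
Definition ag1 (i : 'I_n2) : bool := false.

Lemma P2_size_ge i : (t <= size (P2 i))%N.
Proof. by rewrite P2_size. Qed.

Lemma Pcl1 i x : x \in P2 i -> cl1 x = ag1 i.
Proof. by rewrite P2_mem /cl1 => /eqP ->; rewrite blk_lt. Qed.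

Lemma Pcl2 i x : x \in P2 i -> cl2 x = isact i.
Proof.
rewrite P2_mem /cl2 /blk => /eqP ->; case: ifP => h; last by rewrite ltnNge leq_addr.
by have := ltn_ord i; rewrite /n2 /isact in h *; lia.
Qed.

Lemma n2_gt0 : (0 < n2)%N.
Proof. by rewrite /n2 addn_gt0 q0 orbT. Qed.

Lemma pzero (f : rule R m) C : is_rule t f -> metric_distortion_le t f C ->
  forall x : 'I_m, (2*q*t <= x)%N -> f n2 (top_profile t sU) x = 0.
Proof.
move=> Hr Hm x hx.
have m0 : (0 < m)%N by lia.
pose x0 : 'I_m := Ordinal m0.
have H := Hm n2 _ _ (dcl_pm R ag1 cl1) (dcl_cons R Pcl1) x0.
rewrite (@top_eq _ _ t P2 _ keyU P2_uniq P2_size_ge) in H.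
have hx0 : SC (dcl R ag1 cl1) x0 = 0.
  rewrite SC_dcl big1 // => i _; by rewrite /ag1 /cl1 /= div0n muln_gt0 q0 andbT.
rewrite hx0 mulr0 /expect in H.
set pp := f n2 _ in H *.
have Hp : forall y, 0 <= pp y by move=> y; exact: (Hr n2 sU).1.
have SC0 : forall y, 0 <= SC (dcl R ag1 cl1) y.
  by move=> y; rewrite SC_dcl; apply: sumr_ge0 => i _; rewrite ler0n.
have E0 : \sum_(y < m) pp y * SC (dcl R ag1 cl1) y = 0.
  by apply: le_anti; rewrite H /=; apply: sumr_ge0 => y _; rewrite mulr_ge0.
have Z := psumr_eq0P (fun y _ => mulr_ge0 (Hp y) (SC0 y)) E0; have := Z x isT.
have -> : SC (dcl R ag1 cl1) x = n2%:R.
  rewrite SC_dcl (eq_bigr (fun _ => 1)); first by rewrite sumr_const card_ord.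
  move=> i _; rewrite /ag1 /cl1 /= -leqNgt leq_divRL //.
  by rewrite hx.
move/eqP; rewrite mulf_eq0 pnatr_eq0 (negbTE (lt0n_neq0 n2_gt0)) orbF.
by move/eqP.
Qed.

Lemma isact_l (j : 'I_(q*g)) : isact (lshift q j) = false.
Proof. by rewrite /isact /= leqNgt ltn_ord. Qed.
Lemma isact_r (k : 'I_q) : isact (rshift (q*g) k) = true.
Proof. by rewrite /isact /= leq_addr. Qed.

Lemma pA_bound (f : rule R m) C : is_rule t f -> metric_distortion_le t f C ->
  g%:R * (\sum_(x < m) f n2 (top_profile t sU) x * (cl2 x)%:R) <= Num.max C 1.
Proof.
move=> Hr Hm.
have H := Hm n2 _ _ (dcl_pm R isact cl2) (dcl_cons R Pcl2) A2.
rewrite (@top_eq _ _ t P2 _ keyU P2_uniq P2_size_ge) in H.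
set pp := f n2 _ in H *.
have Hp : forall y, 0 <= pp y by move=> y; exact: (Hr n2 sU).1.
have hA : SC (dcl R isact cl2) A2 = q%:R.
  rewrite SC_dcl /n2 big_split_ord /=.
  have -> : cl2 A2 = false by rewrite /cl2 /A2 /= mulnK // ltnNge leq_pmull.
  rewrite big1 ?add0r; last by move=> j _; rewrite isact_l.
  rewrite (eq_bigr (fun _ => 1)) ?sumr_const ?card_ord //.
  by move=> k _; rewrite isact_r.
have hL : forall x, (q * g)%:R * (cl2 x)%:R <= SC (dcl R isact cl2) x.
  move=> x; rewrite SC_dcl /n2 big_split_ord /=.
  apply: ler_wpDr; first by apply: sumr_ge0 => k _; rewrite ler0n.
  rewrite (eq_bigr (fun _ => (cl2 x)%:R)) ?sumr_const ?card_ord ?mulr_natl //.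
  by move=> j _; rewrite isact_l; case: (cl2 x).
have H2 : (q * g)%:R * (\sum_(x < m) pp x * (cl2 x)%:R) <= Num.max C 1 * q%:R.
  have H3 : (q * g)%:R * (\sum_(x < m) pp x * (cl2 x)%:R) <= expect pp (SC (dcl R isact cl2)).
    rewrite /expect mulr_sumr; apply: ler_sum => y _.
    by rewrite mulrA (mulrC _ (pp y)) -mulrA ler_wpM2l.
  apply: (le_trans H3); apply: (le_trans H).
  by rewrite hA ler_wpM2r ?ler0n // le_max lexx.
have q0' : 0 < (q%:R : R) by rewrite ltr0n.
rewrite -(ler_pM2r q0'); apply: le_trans H2.
by rewrite natrM le_eqVlt; apply/orP; left; apply/eqP; ring.
Qed.

Lemma inst2 (f : rule R m) C : is_rule t f -> metric_distortion_le t f C ->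
  unit_sum uU /\ utility_consistent sU uU /\
  expect (f n2 (top_profile t sU)) (SW uU) <= Num.max C 1 / (g%:R * t%:R) + g%:R / D2%:R /\
  q%:R / t.+1%:R <= SW uU A2.
Proof.
move=> Hr Hm; split.
  apply: ulev_unit => i; exists (nth A2 (P2 i) 0).
  by rewrite /Kx mem_nth // P2_size.
split; first exact: ulev_cons.
split.
  set pp := f n2 _.
  have := E_bound (Hr n2 sU).1 (Hr n2 sU).2 (pzero Hr Hm).
  rewrite -/pp => HE; apply: (le_trans HE); rewrite lerD2r.
  have := pA_bound Hr Hm; rewrite -/pp -/(cl2 _).
  set pA := \sum_(x < m) _.
  move=> Hg.
  have gnz : (g%:R : R) != 0 by rewrite pnatr_eq0 -lt0n.
  have hT : (t%:R : R) != 0 by rewrite pnatr_eq0 -lt0n.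
  have -> : pA / t%:R = (g%:R * pA) / (g%:R * t%:R) by field; rewrite hT gnz.
  by apply: ler_wpM2r => //; rewrite invr_ge0 mulr_ge0 ?ler0n.
rewrite /SW /n2 big_split_ord /=.
apply: ler_wpDl; first by apply: sumr_ge0 => j _; exact: ulev_ge0.
apply: le_trans (ler_sum _ (fun k _ => u_act_A (isact_r k))).
by rewrite sumr_const card_ord mulr_natl.
Qed.
End Inst2.

End W5.
Import W5.

Module W6.
Import Order.TTheory GRing.Theory Num.Theory.
Set Implicit Arguments. Unset Strict Implicit. Unset Printing Implicit Defensive.

Lemma sum_delta (R : realType) m (p : 'I_m -> R) (b : 'I_m) :
  (\sum_(x < m) p x * (x == b)%:R = p b)%R.
Proof.
rewrite (eq_bigr (fun x => if x == b then p x else 0%R)); last first.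
  by move=> x _; case: (x == b); rewrite ?mulr1 ?mulr0.
by rewrite -big_mkcond big_pred1_eq.
Qed.

Section Inst1.
Variable R : realType.
Variables (m k : nat).
Hypotheses (k0 : 0 < k) (hk : k * k + k <= m).
Definition n1 := (k * k)%N.
Lemma bb_lt (i : 'I_n1) : i < m. Proof. by have := ltn_ord i; rewrite /n1; lia. Qed.
Lemma cc_lt (j : 'I_k) : k * k + j < m. Proof. by have := ltn_ord j; lia. Qed.
Definition bb (i : 'I_n1) : 'I_m := Ordinal (bb_lt i).
Definition cc (j : 'I_k) : 'I_m := Ordinal (cc_lt j).
Definition key1 (i : 'I_n1) (x : 'I_m) : nat :=
  if x == bb i then 0 else if val x == k * k + i %/ k then 1 else 2.
Definition P1 (i : 'I_n1) : seq 'I_m := [::].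
Definition s1 := bprof P1 key1.

Lemma bb_cc i j : (bb i == cc j) = false.
Proof. apply/negbTE; apply/eqP => /(congr1 val) /=; have := ltn_ord i; rewrite /n1; lia. Qed.

Lemma cc_inj : injective cc.
Proof. by move=> j1 j2 /(congr1 val) /= /eqP; rewrite eqn_add2l => /eqP /val_inj. Qed.

Variable js : 'I_k.
Definition lvl1 (i : 'I_n1) : nat := if i %/ k == js then 2 else 1.
Definition u1 : 'I_n1 -> 'I_m -> R := ulev R P1 key1 lvl1.

Lemma K1_grp (i : 'I_n1) (x : 'I_m) : i %/ k == js -> (Kx P1 key1 i x <= lvl1 i) = (x == bb i) || (x == cc js).
Proof.
move=> /eqP h; rewrite /Kx /P1 in_nil /key1 /lvl1 h eqxx.
case: (x == bb i) => //=.
have -> : (x == cc js) = (val x == k * k + js) by [].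
by case: (val x == _).
Qed.

Lemma K1_ngrp (i : 'I_n1) (x : 'I_m) : i %/ k != js -> (Kx P1 key1 i x <= lvl1 i) = (x == bb i).
Proof.
move=> /negbTE h; rewrite /Kx /P1 in_nil /key1 /lvl1 h.
by case: (x == bb i) => //=; case: (val x == _).
Qed.

Local Open Scope ring_scope.

Lemma u1_le (i : 'I_n1) (x : 'I_m) : u1 i x <= (x == bb i)%:R + ((i %/ k == js)%N && (x == cc js))%:R / 2%:R.
Proof.
rewrite /u1 /ulev; case: (boolP (i %/ k == js)%N) => h.
  rewrite K1_grp //.
  have -> : #|[pred y | (Kx P1 key1 i y <= lvl1 i)%N]| = #|[set bb i; cc js]|.
    by apply: eq_card => y; rewrite !inE K1_grp.
  rewrite cards2 bb_cc /=.
  case: (x == bb i); case: (x == cc js); rewrite /= ?mul0r ?addr0 ?add0r;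
    lra.
rewrite K1_ngrp //.
have -> : #|[pred y | (Kx P1 key1 i y <= lvl1 i)%N]| = #|pred1 (bb i)|.
  by apply: eq_card => y; rewrite !inE K1_ngrp.
rewrite card1 /= mul0r addr0; case: (x == bb i); rewrite ?invr1 //.
Qed.

Lemma u1_c (i : 'I_n1) : (i %/ k == js)%N -> 1 / 2%:R <= u1 i (cc js).
Proof.
move=> h; rewrite /u1 /ulev K1_grp // eqxx orbT.
have -> : #|[pred y | (Kx P1 key1 i y <= lvl1 i)%N]| = #|[set bb i; cc js]|.
  by apply: eq_card => y; rewrite !inE K1_grp.
by rewrite cards2 bb_cc /= mul1r.
Qed.

Lemma u1_unit : unit_sum u1.
Proof.
apply: ulev_unit => i; exists (bb i).
by rewrite /Kx /P1 in_nil /key1 eqxx /lvl1; case: ifP.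
Qed.

Lemma u1_cons : utility_consistent s1 u1.
Proof. exact: ulev_cons. Qed.

Lemma E1_bound (p : 'I_m -> R) : (forall x, 0 <= p x) -> \sum_(x < m) p x = 1 ->
  k%:R * p (cc js) <= 1 -> expect p (SW u1) <= 3%:R / 2%:R.
Proof.
move=> p0 p1 hc.
pose w (i : 'I_n1) (x : 'I_m) : R :=
  (x == bb i)%:R + ((i %/ k == js)%N && (x == cc js))%:R / 2%:R.
have step1 : expect p (SW u1) <= \sum_(i < n1) \sum_(x < m) p x * w i x.
  rewrite exchange_big /expect /SW; apply: ler_sum => x _; rewrite mulr_sumr.
  by apply: ler_sum => i _; apply: ler_wpM2l => //; exact: u1_le.
apply: (le_trans step1).
have step2 : forall i, \sum_(x < m) p x * w i x =
    p (bb i) + (i %/ k == js)%N%:R * (p (cc js) / 2%:R).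
  move=> i; rewrite /w (eq_bigr (fun x => p x * (x == bb i)%:R +
      (i %/ k == js)%N%:R / 2%:R * (p x * (x == cc js)%:R))); last first.
    move=> x _; case: (i %/ k == js)%N; case: (x == bb i); case: (x == cc js);
    rewrite /=; ring.
  rewrite big_split /= -mulr_sumr !sum_delta; congr (_ + _).
  by ring.
rewrite (eq_bigr _ (fun i _ => step2 i)) big_split /= -mulr_suml.
rewrite sum_bool (_ : #|_| = k); last first.
  exact: (@card_block (k * k) k js k0 ltac:(by rewrite leq_mul2r ltn_ord orbT)).
have hb : \sum_(i < n1) p (bb i) <= 1.
  rewrite -p1; apply: sum_inj => // i1 i2 /(congr1 val) /= /val_inj //.
have hc' : k%:R * (p (cc js) / 2%:R) <= 1 / 2%:R.
  by rewrite mulrA ler_wpM2r // invr_ge0 ler0n.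
have -> : (3%:R / 2%:R : R) = 1 + 1 / 2%:R by field.
exact: lerD.
Qed.

Lemma SW1_bound : k%:R / 2%:R <= SW u1 (cc js).
Proof.
rewrite /SW.
apply: (le_trans (y := \sum_(i < n1) (i %/ k == js)%N%:R * (1 / 2%:R))).
  rewrite -mulr_suml sum_bool (_ : #|_| = k) ?mul1r //.
  exact: (@card_block (k * k) k js k0 ltac:(by rewrite leq_mul2r ltn_ord orbT)).
apply: ler_sum => i _; case: (boolP (i %/ k == js)%N) => h.
  by rewrite mul1r u1_c.
by rewrite mul0r ulev_ge0.
Qed.
End Inst1.

End W6.
Import W6.

Module W7.
Import Order.TTheory GRing.Theory Num.Theory.
Set Implicit Arguments. Unset Strict Implicit. Unset Printing Implicit Defensive.
Local Open Scope ring_scope.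

Lemma sq_le (R : realType) (x y : R) : 0 <= x -> 0 <= y -> x ^+ 2 <= y ^+ 2 -> x <= y.
Proof. by move=> hx hy; rewrite ler_pXn2r // ?nnegrE. Qed.

Lemma arithA (R : realType) (C' M T G Q DD E : R) :
  1 <= C' -> 1 <= T -> 1 <= G -> 1 <= Q -> G * G * T <= M -> M <= 8%:R * Q * T ->
  M <= 4%:R * DD -> 0 <= E -> E <= C' / (G * T) + G / DD ->
  (16%:R * (2%:R * C' + 8%:R))^-1 * (M / T * (G + 1)) * E <= Q / (T + 1).
Proof.
move=> hC hT hG hQ hGM hMQ hMD hE hEb.
have T0 : 0 < T by lra.
have G0 : 0 < G by lra.
have D0 : 0 < DD by nra.
have M0 : 0 < M by nra.
have K0 : 0 < 16%:R * (2%:R * C' + 8%:R) :> R by nra.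
have h1 : E * (G + 1) <= (2%:R * C' + 8%:R) / T.
  have h2 : E * (G + 1) <= (C' / (G * T) + G / DD) * (2%:R * G).
    apply: le_trans (ler_wpM2l hE (_ : G + 1 <= 2%:R * G)) _; first lra.
    by apply: ler_wpM2r => //; lra.
  apply: (le_trans h2).
  have e1 : (C' / (G * T)) * (2%:R * G) = 2%:R * C' / T by field; lra.
  have e2 : G / DD * (2%:R * G) <= 8%:R / T.
    have -> : G / DD * (2%:R * G) = (2%:R * G * G) / DD by field; lra.
    rewrite ler_pdivrMr //.
    have -> : 8%:R / T * DD = (8%:R * DD) / T by field; lra.
    rewrite ler_pdivlMr //.
    nra.
  rewrite mulrDl e1.
  have -> : (2%:R * C' + 8%:R) / T = 2%:R * C' / T + 8%:R / T by field; lra.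
  by rewrite lerD2l.
have h3 : (16%:R * (2%:R * C' + 8%:R))^-1 * (M / T * (G + 1)) * E
          = (16%:R * (2%:R * C' + 8%:R))^-1 * (M / T) * (E * (G + 1)) by ring.
rewrite h3.
apply: (le_trans (y := (16%:R * (2%:R * C' + 8%:R))^-1 * (M / T) * ((2%:R * C' + 8%:R) / T))).
  apply: ler_wpM2l => //; apply: mulr_ge0; first by rewrite invr_ge0; lra.
  by apply: divr_ge0; lra.
have -> : (16%:R * (2%:R * C' + 8%:R))^-1 * (M / T) * ((2%:R * C' + 8%:R) / T)
        = M / (16%:R * T * T) by field; lra.
rewrite ler_pdivrMr; last by nra.
rewrite mulrAC ler_pdivlMr; last by lra.
nra.
Qed.

Lemma arithB (R : realType) (C' Y E K : R) :
  1 <= C' -> 0 <= Y -> Y <= 4%:R * K -> 0 <= E -> E <= 3%:R / 2%:R ->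
  (16%:R * (2%:R * C' + 8%:R))^-1 * Y * E <= K / 2%:R.
Proof.
move=> hC hY hYK hE hE2.
have K0 : 0 < 16%:R * (2%:R * C' + 8%:R) :> R by nra.
have hc : (16%:R * (2%:R * C' + 8%:R))^-1 <= 1 / 160%:R :> R.
  rewrite mul1r lef_pV2 ?posrE; lra.
have hc0 : 0 <= (16%:R * (2%:R * C' + 8%:R))^-1 :> R by rewrite invr_ge0; lra.
have h1 : Y * E <= 4%:R * K * (3%:R / 2%:R).
  apply: le_trans (ler_wpM2r hE hYK) _; apply: ler_wpM2l; lra.
rewrite -mulrA; apply: le_trans (ler_wpM2l hc0 h1) _.
apply: le_trans (ler_wpM2r _ hc) _; first by nra.
lra.
Qed.

End W7.
Import W7.

Module W8.
Import Order.TTheory GRing.Theory Num.Theory.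
Local Open Scope ring_scope.

Lemma expect_ge0 (R : realType) n m (p : 'I_m -> R) (u : 'I_n -> 'I_m -> R) :
  (forall x, 0 <= p x) -> (forall i x, 0 <= u i x) -> 0 <= expect p (SW u).
Proof.
move=> hp hu; apply: sumr_ge0 => x _; apply: mulr_ge0 => //.
by apply: sumr_ge0 => i _.
Qed.


End W8.
Import W8.

Local Open Scope ring_scope.

Theorem mainTheorem11 (R : realType) (C : R) :
  exists c : R, 0 < c /\ exists m0 : nat,
    forall (m t : nat), (m0 <= m)%N -> (1 <= t <= m)%N ->
    forall f : rule R m, is_rule t f -> metric_distortion_le t f C ->
      util_distortion_ge t f
        (c * Num.max (m%:R * Num.sqrt (m%:R) / (t%:R * Num.sqrt (t%:R)))
                     (Num.sqrt (m%:R))).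
Proof.
set C' := Num.max C 1.
have hC : 1 <= C' by rewrite le_max lexx orbT.
exists (16%:R * (2%:R * C' + 8%:R))^-1; split.
  by rewrite invr_gt0; lra.
exists 64%N => m t hm /andP[t1 tm] f Hr Hm.
set M : R := m%:R; set T : R := t%:R.
have T1 : 1 <= T by rewrite ler1n.
have M1 : 64%:R <= M by rewrite ler_nat.
have sT0 : 0 < Num.sqrt T by rewrite sqrtr_gt0; lra.
have sM0 : 0 < Num.sqrt M by rewrite sqrtr_gt0; lra.
have sTsq : Num.sqrt T ^+ 2 = T by rewrite sqr_sqrtr //; lra.
have sMsq : Num.sqrt M ^+ 2 = M by rewrite sqr_sqrtr //; lra.
have TsT0 : 0 < T * Num.sqrt T by apply: mulr_gt0 => //; lra.
case: (leqP (t * t * t) (m * m)) => hcase.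
-
  have h4t : (4 * t <= m)%N.
    rewrite leqNgt; apply/negP => h.
    have h1 : (m * m * m < 64 * (t * t * t))%N by nia.
    have h2 : (m * m * m < 64 * (m * m))%N by nia.
    nia.
  set q := (m %/ (4 * t))%N.
  have t4 : (0 < 4 * t)%N by lia.
  have hq1 : (q * (4 * t) <= m)%N := leq_trunc_div m (4 * t).
  have hq2 : (m < q.+1 * (4 * t))%N := ltn_ceil m t4.
  have q0 : (0 < q)%N by rewrite divn_gt0.
  have [g /andP[hg1 hg2]] := isqrt m t1.
  have g0 : (0 < g)%N.
    rewrite lt0n; apply/eqP => g0; rewrite g0 in hg2; lia.
  have hm2 : (2 * q * t < m)%N by nia.
  have hD : (0 < D2 m t q)%N by rewrite /D2; nia.
  have hMD : (m <= 4 * D2 m t q)%N by rewrite /D2; nia.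
  have hMQ : (m <= 8 * q * t)%N by nia.
  have [Hu [Hc [HE HSW]]] := inst2 t1 q0 g0 hm2 hD Hr Hm.
  exists (n2 q g), (sU g hm2), (uU R hm2).
  split; first exact: n2_gt0.
  split => //; split => //; exists (A2 hm2).
  set E := expect _ _ in HE *.
  have E0 : 0 <= E.
    apply: expect_ge0; first exact: (Hr _ _).1.
    by move=> i x; apply: ulev_ge0.
  set G : R := g%:R; set Q : R := q%:R.
  have G1 : 1 <= G by rewrite ler1n.
  have hTsT : T * Num.sqrt T <= M.
    apply: sq_le; [lra | lra | ].
    rewrite exprMn sTsq.
    have : ((t * t * t)%N%:R : R) <= (m * m)%N%:R by rewrite ler_nat.
    by rewrite !natrM -/M -/T; nra.
  have hYX : Num.sqrt M <= M * Num.sqrt M / (T * Num.sqrt T).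
    rewrite ler_pdivlMr //; nra.
  have hsq : Num.sqrt M <= (G + 1) * Num.sqrt T.
    apply: sq_le; [lra | nra | ].
    rewrite exprMn sTsq sMsq.
    have : (m%:R : R) <= ((g.+1 * g.+1 * t)%N)%:R by rewrite ler_nat ltnW.
    by rewrite !natrM -natr1 -/M -/T -/G.
  have hX : M * Num.sqrt M / (T * Num.sqrt T) <= M / T * (G + 1).
    rewrite ler_pdivrMr //.
    have -> : M / T * (G + 1) * (T * Num.sqrt T) = M * ((G + 1) * Num.sqrt T).
      by field; lra.
    apply: ler_wpM2l => //; lra.
  have hmax : Num.max (M * Num.sqrt M / (T * Num.sqrt T)) (Num.sqrt M) <= M / T * (G + 1).
    by rewrite ge_max hX /= (le_trans hYX hX).
  apply: le_trans (_ : _ <= Q / (T + 1)) _; last by rewrite natr1.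
  have Q1 : 1 <= Q by rewrite ler1n.
  have hGM : G * G * T <= M by rewrite -!natrM ler_nat.
  have hMQ' : M <= 8%:R * Q * T by rewrite -(natrM R 8) -!natrM ler_nat.
  have hMD' : M <= 4%:R * (D2 m t q)%:R by rewrite -(natrM R 4) ler_nat.
  have HA := arithA hC T1 G1 Q1 hGM hMQ' hMD' E0 HE.
  apply: le_trans HA.
  apply: ler_wpM2r => //; apply: ler_wpM2l => //.
  by rewrite invr_ge0; lra.
-
  have [k /andP[hk1 hk2]] := isqrt m (t:=4) isT.
  have k0 : (0 < k)%N.
    rewrite lt0n; apply/eqP => k0; rewrite k0 in hk2; lia.
  have hk : (k * k + k <= m)%N by nia.
  have hk16 : (m <= 16 * (k * k))%N by nia.
  set p := f (n1 k) (top_profile t (s1 k0 hk)).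
  have p0 : forall x, 0 <= p x := (Hr _ _).1.
  have p1 := (Hr (n1 k) (s1 k0 hk)).2.
  have hS : \sum_(j < k) p (cc k0 hk j) <= 1.
    by rewrite -p1; apply: sum_inj => //; exact: cc_inj.
  have [js hjs] : exists js : 'I_k, k%:R * p (cc k0 hk js) <= 1.
    case: (boolP [exists js : 'I_k, k%:R * p (cc k0 hk js) <= 1]) => [/existsP//|/existsPn H].
    exfalso.
    have : \sum_(j < k) (1 : R) < \sum_(j < k) k%:R * p (cc k0 hk j).
      apply: ltr_sum.
        by apply/hasP; exists (Ordinal k0); rewrite ?mem_index_enum.
      by move=> j _; rewrite ltNge; exact: H j.
    rewrite sumr_const card_ord -mulr_sumr.
    have K0 : 0 <= (k%:R : R) by rewrite ler0n.
    rewrite -[1 *+ k]mulr_natl mulr1 => h.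
    have := ler_wpM2l K0 hS; rewrite mulr1; lra.
  exists (n1 k), (s1 k0 hk), (u1 R k0 hk js).
  split; first by rewrite /n1 muln_gt0 k0.
  split; first exact: u1_unit.
  split; first exact: u1_cons.
  exists (cc k0 hk js).
  set E := expect _ _.
  have HE : E <= 3%:R / 2%:R := E1_bound p0 p1 hjs.
  have HSW := SW1_bound R k0 hk js.
  have E0 : 0 <= E.
    apply: expect_ge0 => //.
    by move=> i x; apply: ulev_ge0.
  set K : R := k%:R.
  have hMT : M <= T * Num.sqrt T.
    apply: sq_le; [lra | lra | ].
    rewrite exprMn sTsq.
    have : ((m * m)%N%:R : R) <= (t * t * t)%N%:R by rewrite ler_nat ltnW.
    by rewrite !natrM -/M -/T; nra.
  have hXY : M * Num.sqrt M / (T * Num.sqrt T) <= Num.sqrt M.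
    rewrite ler_pdivrMr //; nra.
  have hY4 : Num.sqrt M <= 4%:R * K.
    apply: sq_le; [lra | rewrite mulr_ge0 ?ler0n // | ].
    rewrite sMsq exprMn.
    have : (m%:R : R) <= (16 * (k * k))%N%:R by rewrite ler_nat.
    by rewrite !natrM -/M -/K; nra.
  have hmax : Num.max (M * Num.sqrt M / (T * Num.sqrt T)) (Num.sqrt M) <= 4%:R * K.
    by rewrite ge_max hY4 (le_trans hXY hY4).
  have hmax0 : 0 <= Num.max (M * Num.sqrt M / (T * Num.sqrt T)) (Num.sqrt M).
    by rewrite le_max; apply/orP; right; lra.
  apply: le_trans (arithB hC hmax0 hmax E0 HE) _.
  exact: HSW.
Qed.
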